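(* Let $\mathcal{G}=(V,E,\lambda)$ be a temporal graph with $m=|E|$ edges, maximum footprint degree $\Delta$, and lifetime of length $\tau$, and let $s\in V$. The procedure that initializes $B_s=\{(\bot,-\infty,\infty)\}$ and $B_v=\emptyset$ for $v\neq s$ and calls $\mathrm{improveNeighbors}(s)$ — where $\mathrm{improveNeighbors}(u)$, for every triplet $(\cdot,a,d)\in B_u$ and every neighbor $v$ of $u$, sets $a'=\min\{t\in\lambda(uv)\mid t\ge a\}$ and $d'=\max\{t\in\lambda(uv)\mid t\le d\}$ and, if $B_v+(u,a',d')\neq B_v$, sets $B_v\gets B_v+(u,a',d')$ and calls $\mathrm{improveNeighbors}(v)$ — runs in time polynomial in the size of the input, namely $O(m\Delta^2\tau^4)$. Here $B+(x,a',d')$ adds the triplet to $B$ unless some $(x,a'',d'')\in B$ has $a''\le a'$ and $d''\ge d'$, and upon adding removes all $(x,a'',d'')$ with $a'\le a''$ and $d'\ge d''$.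
   Context: A temporal graph is $\mathcal{G}=(V,E,\lambda)$ with $V$ finite, $E$ undirected edges, $\lambda:E\to 2^{\mathbb{N}}$ the time labels. The lifetime is the range of time labels, of length $\tau$. $\Delta$ is the maximum number of neighbors of a vertex in the footprint $(V,E)$. It is assumed that, for a given edge, finding the smallest (resp. largest) label within a given time range can be done in time $O(\tau)$ (as holds, e.g., with time-augmented adjacency lists or sequences of adjacency matrices). *)

(* Defs.v *)
From HB Require Import structures.
From mathcomp Require Import all_boot all_order.
Set Implicit Arguments. Unset Strict Implicit. Unset Printing Implicit Defensive.

Inductive ext := MInf | Fin of nat | PInf.

Definition ext_eqb (x y : ext) : bool :=
  match x, y with
  | MInf, MInf => true | PInf, PInf => true
  | Fin m, Fin n => m == n | _, _ => false end.

Lemma ext_eqP : Equality.axiom ext_eqb.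
Proof.
by case=> [|m|] [|n|] /=; try (by constructor); apply: (iffP eqP) => [->|[]].
Qed.
HB.instance Definition _ := hasDecEq.Build ext ext_eqP.

Definition ext_le (x y : ext) : bool :=
  match x, y with
  | MInf, _ => true | _, PInf => true
  | Fin m, Fin n => m <= n | _, _ => false end.
Definition ext_min x y := if ext_le x y then x else y.
Definition ext_max x y := if ext_le x y then y else x.

Definition firstge (l : seq nat) (a : ext) : ext :=
  foldr (fun t acc => if ext_le a (Fin t) then ext_min (Fin t) acc else acc) PInf l.
Definition lastle (l : seq nat) (d : ext) : ext :=
  foldr (fun t acc => if ext_le (Fin t) d then ext_max (Fin t) acc else acc) MInf l.

(* triplets (x, a, d); x = None stands for the symbol _|_ *)
Definition trip (V : finType) := (option V * ext * ext)%type.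

Definition addt (V : finType) (B : seq (trip V)) (x : option V) (a d : ext)
  : seq (trip V) :=
  if has (fun t : trip V => [&& t.1.1 == x, ext_le t.1.2 a & ext_le d t.2]) B
  then B
  else (x, a, d) :: filter
         (fun t : trip V => ~~ [&& t.1.1 == x, ext_le a t.1.2 & ext_le t.2 d]) B.

Definition updB (V : finType) (B : V -> seq (trip V)) (v : V) (Bv : seq (trip V)) :=
  fun w => if w == v then Bv else B w.

Definition state (V : finType) := ((V -> seq (trip V)) * nat)%type.

(* improveNeighbors, instrumented with a step counter (second component of
   the state) and with fuel (None = fuel exhausted).  Cost model:
   - 1 unit per call;
   - per (triplet, neighbor) iteration: tau+1 units for each of the two
     label lookups (assumption of the paper: O(tau)), plus 1 + (number of
     triplets of B_v with first component u) for computing B_v + (u,a',d')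
     and testing whether it differs from B_v (triplets are assumed stored
     per first component). *)
Fixpoint improve (V : finType) (nbrs : V -> seq V) (lam : V -> V -> seq nat)
  (tau : nat) (fuel : nat) (u : V) (st : state V) : option (state V) :=
  match fuel with
  | 0 => None
  | fuel'.+1 =>
    let B0 := st.1 in
    let step (ost : option (state V)) (p : trip V * V) : option (state V) :=
      match ost with
      | None => None
      | Some stc =>
        let B := stc.1 in let c := stc.2 in
        let a := p.1.1.2 in let d := p.1.2 in let v := p.2 in
        let a' := firstge (lam u v) a in
        let d' := lastle (lam u v) d in
        let c1 := c + 2 * tau.+1
                    + (count (fun t : trip V => t.1.1 == Some u) (B v)).+1 in
        let Bv' := addt (B v) (Some u) a' d' in
        if Bv' != B v then improve nbrs lam tau fuel' v (updB B v Bv', c1)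
        else Some (B, c1)
      end in
    foldl step (Some (B0, st.2.+1)) [seq (t, v) | t <- B0 u, v <- nbrs u]
  end.

Definition initB (V : finType) (s : V) : V -> seq (trip V) :=
  fun v => if v == s then [:: (None, MInf, PInf)] else [::].

Definition nedges (V : finType) (e : rel V) : nat :=
  #|[set [set x.1; x.2] | x in [set x : V * V | e x.1 x.2]]|.
Definition maxdeg (V : finType) (e : rel V) : nat :=
  \max_(v : V) #|[set w | e v w]|.

(* Main.v *)
Require Import Defs.
From HB Require Import structures.
From mathcomp Require Import all_boot all_order.
From mathcomp Require Import zify.
Set Implicit Arguments. Unset Strict Implicit. Unset Printing Implicit Defensive.

Lemma ext_le_refl x : ext_le x x.
Proof. by case: x => //= n. Qed.

Lemma ext_le_trans x y z : ext_le x y -> ext_le y z -> ext_le x z.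
Proof. case: x => [|m|]; case: y => [|n|]; case: z => [|p|] //=; exact: leq_trans. Qed.

Lemma ext_le_total x y : ext_le x y || ext_le y x.
Proof. case: x => [|m|]; case: y => [|n|] //=; exact: leq_total. Qed.

Lemma firstge_mem l a : firstge l a = PInf \/ exists2 t, t \in l & firstge l a = Fin t.
Proof.
elim: l => [|t l IH] /=; first by left.
case: ifP => _; last first.
  case: IH => [->|[t' Ht' ->]]; [by left| by right; exists t'; rewrite // inE Ht' orbT].
rewrite /ext_min; case: ifP => _.
  by right; exists t; rewrite // inE eqxx.
case: IH => [->|[t' Ht' ->]]; [by left| by right; exists t'; rewrite // inE Ht' orbT].
Qed.

Lemma lastle_mem l a : lastle l a = MInf \/ exists2 t, t \in l & lastle l a = Fin t.
Proof.
elim: l => [|t l IH] /=; first by left.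
case: ifP => _; last first.
  case: IH => [->|[t' Ht' ->]]; [by left| by right; exists t'; rewrite // inE Ht' orbT].
rewrite /ext_max; case: ifP => _.
  case: IH => [->|[t' Ht' ->]]; [by left| by right; exists t'; rewrite // inE Ht' orbT].
by right; exists t; rewrite // inE eqxx.
Qed.

Lemma sum_lt_seq (I : eqType) (r : seq I) (F G : I -> nat) i0 :
  i0 \in r -> (forall i, F i <= G i) -> F i0 < G i0 ->
  \sum_(i <- r) F i < \sum_(i <- r) G i.
Proof.
move=> Hi Hle Hlt; elim: r Hi => [|x r IH] //; rewrite inE !big_cons => /orP[/eqP<-|Hr].
  have : \sum_(i <- r) F i <= \sum_(i <- r) G i by apply: leq_sum => i _.
  lia.
have := IH Hr; have := Hle x; lia.
Qed.

Lemma sum_le1_seq (I : Type) (r : seq I) (F : I -> nat) c :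
  (forall i, F i <= c) -> \sum_(i <- r) F i <= size r * c.
Proof.
move=> H; elim: r => [|x r IH]; first by rewrite big_nil.
rewrite big_cons /=; have := H x; lia.
Qed.
Section Main.
Variables (V : finType) (e : rel V) (lam : V -> V -> seq nat)
         (nbrs : V -> seq V) (t0 tau : nat) (s : V).
Hypothesis esym : symmetric e.
Hypothesis eirr : irreflexive e.
Hypothesis lamsym : forall u v, lam u v = lam v u.
Hypothesis lamrange : forall u v, e u v -> forall t, t \in lam u v -> t0 <= t < t0 + tau.
Hypothesis nbrsP : forall u, perm_eq (nbrs u) (enum [pred v | e u v]).

Definition Agrid := PInf :: [seq Fin t | t <- iota t0 tau].
Definition Dgrid := MInf :: [seq Fin t | t <- iota t0 tau].
Definition key (t : trip V) := (t.1.1, t.1.2).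
Definition domb (x : option V) (al de : ext) (t : trip V) :=
  [&& t.1.1 == x, ext_le t.1.2 al & ext_le de t.2].
Definition score (w : V) (L : seq (trip V)) :=
  \sum_(al <- Agrid) \sum_(de <- Dgrid) has (domb (Some w) al de) L.
Definition Apairs := [set p : V * V | e p.1 p.2].
Definition Phi (B : V -> seq (trip V)) := \sum_(p in Apairs) score p.1 (B p.2).
Definition Inv (B : V -> seq (trip V)) := forall v, uniq (map key (B v)) /\
  forall t, t \in B v -> match t.1.1 with None => t.1.2 == MInf
                          | Some w => e v w && (t.1.2 \in Agrid) end.

Lemma size_Agrid : size Agrid = tau.+1.
Proof. by rewrite /= size_map size_iota. Qed.
Lemma size_Dgrid : size Dgrid = tau.+1.
Proof. by rewrite /= size_map size_iota. Qed.

Lemma mem_nbrs u w : (w \in nbrs u) = e u w.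
Proof. by rewrite (perm_mem (nbrsP u)) mem_enum. Qed.

Lemma size_nbrs u : size (nbrs u) <= maxdeg e.
Proof.
rewrite (perm_size (nbrsP u)) -cardE /maxdeg.
have := @leq_bigmax _ (fun v => #|[set w | e v w]|) u.
by rewrite cardsE.
Qed.

Lemma firstge_grid u v a : e u v -> firstge (lam u v) a \in Agrid.
Proof.
move=> Huv; case: (firstge_mem (lam u v) a) => [->|[t Ht ->]]; first by rewrite inE eqxx.
by rewrite in_cons; apply/orP; right; apply: map_f; rewrite mem_iota; apply: lamrange Ht.
Qed.

Lemma lastle_grid u v a : e u v -> lastle (lam u v) a \in Dgrid.
Proof.
move=> Huv; case: (lastle_mem (lam u v) a) => [->|[t Ht ->]]; first by rewrite inE eqxx.
by rewrite in_cons; apply/orP; right; apply: map_f; rewrite mem_iota; apply: lamrange Ht.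
Qed.

Definition filt (u : V) a d (L : seq (trip V)) :=
  filter (fun t : trip V => ~~ [&& t.1.1 == Some u, ext_le a t.1.2 & ext_le t.2 d]) L.

Lemma addt_new L u a d : addt L (Some u) a d != L ->
  addt L (Some u) a d = (Some u, a, d) :: filt u a d L /\ ~~ has (domb (Some u) a d) L.
Proof. by rewrite /addt /filt /domb; case: ifP => H; [rewrite eqxx | split=> //; apply/negbT]. Qed.

Lemma dom_mono L u a d x al de : ~~ has (domb (Some u) a d) L ->
  has (domb x al de) L -> has (domb x al de) ((Some u, a, d) :: filt u a d L).
Proof.
move=> _ /hasP[t Ht /and3P[/eqP Hx Ha Hd]].
case Hf: ([&& t.1.1 == Some u, ext_le a t.1.2 & ext_le t.2 d]).
  move/and3P: Hf => [/eqP Hu Ha' Hd'].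
  rewrite /= /domb /= -Hx Hu eqxx (ext_le_trans Ha' Ha) (ext_le_trans Hd Hd').
  by [].
apply/orP; right; apply/hasP; exists t; last by rewrite /domb Hx eqxx Ha Hd.
by rewrite mem_filter Hf Ht.
Qed.

Lemma score_mono L u a d w : ~~ has (domb (Some u) a d) L ->
  score w L <= score w ((Some u, a, d) :: filt u a d L).
Proof.
move=> H; apply: leq_sum => al _; apply: leq_sum => de _.
by case E: (has _ L) => //; rewrite (dom_mono H E).
Qed.

Lemma score_strict L u a d : ~~ has (domb (Some u) a d) L ->
  a \in Agrid -> d \in Dgrid ->
  score u L < score u ((Some u, a, d) :: filt u a d L).
Proof.
move=> H Ha Hd; apply: (sum_lt_seq Ha).
  move=> al; apply: leq_sum => de _.
  by case E: (has _ L) => //; rewrite (dom_mono H E).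
apply: (sum_lt_seq Hd).
  by move=> de; case E: (has _ L) => //; rewrite (dom_mono H E).
rewrite (negbTE H) /= /domb /= eqxx !ext_le_refl; done.
Qed.
End Main.

Section Main2.
Variables (V : finType) (e : rel V) (lam : V -> V -> seq nat)
         (nbrs : V -> seq V) (t0 tau : nat) (s : V).
Hypothesis esym : symmetric e.
Hypothesis eirr : irreflexive e.
Hypothesis nbrsP : forall u, perm_eq (nbrs u) (enum [pred v | e u v]).

Notation Inv := (Inv e t0 tau).
Notation Phi := (Phi e t0 tau).
Notation Agrid := (Agrid t0 tau).
Notation Dgrid := (Dgrid t0 tau).

Lemma inv_upd B u v a' d' : Inv B -> e u v -> a' \in Agrid ->
  ~~ has (domb (Some u) a' d') (B v) ->
  Inv (updB B v ((Some u, a', d') :: filt u a' d' (B v))).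
Proof.
move=> HI Huv Ha Hnd w; rewrite /updB; case: eqP => [->|_]; last exact: HI.
split.
  rewrite map_cons cons_uniq; apply/andP; split; last first.
    exact: subseq_uniq (map_subseq _ (filter_subseq _ _)) (HI v).1.
  apply/mapP => -[t Ht Hk]; move: Ht; rewrite mem_filter => /andP[Hf Ht].
  move: Hk; rewrite /key /= => -[Hu Ha'].
  have Hd1 : ~~ ext_le d' t.2.
    apply/negP => Hd; move/hasP: Hnd; apply; exists t => //.
    by rewrite /domb -Hu -Ha' eqxx ext_le_refl Hd.
  move: Hf; rewrite -Hu -Ha' eqxx ext_le_refl /= => Hd2.
  by have := ext_le_total d' t.2; rewrite (negbTE Hd1) (negbTE Hd2).
move=> t; rewrite in_cons => /orP[/eqP->|]; first by rewrite /= esym Huv Ha.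
by rewrite mem_filter => /andP[_ Ht]; apply: (HI v).2.
Qed.

Lemma Phi_strict B u v a' d' : e u v -> a' \in Agrid -> d' \in Dgrid ->
  ~~ has (domb (Some u) a' d') (B v) ->
  Phi B < Phi (updB B v ((Some u, a', d') :: filt u a' d' (B v))).
Proof.
move=> Huv Ha Hd Hnd.
have Huv' : (u, v) \in Apairs e by rewrite inE.
rewrite /Phi (bigD1 (u, v) Huv') [X in _ < X](bigD1 (u, v) Huv') /=.
have -> : updB B v ((Some u, a', d') :: filt u a' d' (B v)) v = (Some u, a', d') :: filt u a' d' (B v) by rewrite /updB eqxx.
have H1 := score_strict Hnd Ha Hd.
have H2 : \sum_(i in Apairs e | i != (u, v)) score t0 tau i.1 (B i.2) <=
  \sum_(i in Apairs e | i != (u, v)) score t0 tau i.1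
     (updB B v ((Some u, a', d') :: filt u a' d' (B v)) i.2).
  apply: leq_sum => p _; rewrite /updB; case: eqP => [->|_] //.
  exact: score_mono.
by rewrite -addSn; apply: leq_add H1 H2.
Qed.

Lemma Phi_bound B : Phi B <= #|Apairs e| * tau.+1 ^ 2.
Proof.
rewrite /Phi -sum_nat_const; apply: leq_sum => p _.
rewrite /score; apply: leq_trans (sum_le1_seq _ (c := tau.+1) _) _.
  move=> al; apply: leq_trans (sum_le1_seq _ (c := 1) _) _.
    by move=> de; exact: leq_b1.
  by rewrite size_Dgrid muln1.
by rewrite size_Agrid.
Qed.

Lemma count_bound B v u : Inv B ->
  count (fun t : trip V => t.1.1 == Some u) (B v) <= tau.+1.
Proof.
move=> HI; rewrite -size_filter -(size_Agrid t0 tau).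
rewrite -(size_map (@key V)) -[size Agrid](size_map (fun al => (Some u, al))).
apply: uniq_leq_size; first exact: subseq_uniq (map_subseq _ (filter_subseq _ _)) (HI v).1.
move=> k /mapP[t Ht ->]; move: Ht; rewrite mem_filter => /andP[/eqP Hu Hin].
have := (HI v).2 t Hin; rewrite Hu => /andP[_ Ha].
by rewrite /key Hu; apply: map_f Ha.
Qed.

Lemma size_B B u : Inv B -> size (B u) <= (size (nbrs u) * tau.+1).+1.
Proof.
move=> HI; rewrite -(size_Agrid t0 tau).
have Hs : size ((None, MInf) :: [seq (Some w, al) | w <- nbrs u, al <- Agrid])
   = (size (nbrs u) * size Agrid).+1 by congr S; exact: size_allpairs.
rewrite -Hs -(size_map (@key V)); apply: uniq_leq_size; first exact (HI u).1.
move=> k /mapP[t Ht ->]; have := (HI u).2 t Ht.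
set G := [seq (Some w, al) | w <- nbrs u, al <- Agrid].
rewrite /key; case: t Ht => [[[w|] al] de] Ht /=.
  case/andP => Hw Ha; rewrite in_cons; apply/orP; right.
  by apply: allpairs_f => //; rewrite (mem_nbrs nbrsP).
by move/eqP->; exact: mem_head.
Qed.

Lemma Apairs_bound : #|Apairs e| <= 2 * nedges e.
Proof.
rewrite /nedges; set f := fun x : V * V => [set x.1; x.2].
rewrite (_ : [set x : V * V | e x.1 x.2] = Apairs e) //.
rewrite -sum1_card (partition_big f (mem (f @: Apairs e))) /=; last first.
  by move=> x Hx; apply: imset_f.
rewrite mulnC -sum_nat_const; apply: leq_sum => S /imsetP[x0 Hx0 ->].
rewrite sum1dep_card.
apply: leq_trans (_ : #|[set x0; (x0.2, x0.1)]| <= 2); last by rewrite cards2; case: (_ != _).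
apply: subset_leq_card; apply/subsetP => x; rewrite !inE => /andP[Hx /eqP Hf].
have H1 : x.1 \in f x0 by rewrite -Hf /f !inE eqxx.
have H2 : x.2 \in f x0 by rewrite -Hf /f !inE eqxx orbT.
move: Hx Hx0 H1 H2; clear Hf; rewrite /f !inE; case: x => a b; case: x0 => c d /=.
move=> Hab Hcd /orP[/eqP Ha|/eqP Ha] /orP[/eqP Hb|/eqP Hb]; subst.
- by rewrite eirr in Hab.
- by rewrite eqxx.
- by rewrite eqxx orbT.
- by rewrite eirr in Hab.
Qed.
End Main2.

Definition stepf (V : finType) (nbrs : V -> seq V) (lam : V -> V -> seq nat)
  (tau : nat) (fuel' : nat) (u : V) (ost : option (state V)) (p : trip V * V)
  : option (state V) :=
  match ost with
  | None => None
  | Some stc =>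
    let B := stc.1 in let c := stc.2 in
    let a := p.1.1.2 in let d := p.1.2 in let v := p.2 in
    let a' := firstge (lam u v) a in
    let d' := lastle (lam u v) d in
    let c1 := c + 2 * tau.+1
                + (count (fun t : trip V => t.1.1 == Some u) (B v)).+1 in
    let Bv' := addt (B v) (Some u) a' d' in
    if Bv' != B v then improve nbrs lam tau fuel' v (updB B v Bv', c1)
    else Some (B, c1)
  end.

Lemma improveS (V : finType) (nbrs : V -> seq V) (lam : V -> V -> seq nat)
  (tau : nat) fuel' u (st : state V) :
  improve nbrs lam tau fuel'.+1 u st =
  foldl (stepf nbrs lam tau fuel' u) (Some (st.1, st.2.+1))
        [seq (t, v) | t <- st.1 u, v <- nbrs u].
Proof. by []. Qed.

Lemma mulnB_split K a b c : a <= b -> b <= c -> K * (c - a) = K * (c - b) + K * (b - a).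
Proof. move=> H1 H2; rewrite -mulnDr; congr (K * _); lia. Qed.

Section Main3.
Variables (V : finType) (e : rel V) (lam : V -> V -> seq nat)
         (nbrs : V -> seq V) (t0 tau : nat).
Hypothesis esym : symmetric e.
Hypothesis eirr : irreflexive e.
Hypothesis lamrange : forall u v, e u v -> forall t, t \in lam u v -> t0 <= t < t0 + tau.
Hypothesis nbrsP : forall u, perm_eq (nbrs u) (enum [pred v | e u v]).

Notation Inv := (Inv e t0 tau).
Notation Phi := (Phi e t0 tau).
Definition iterK := 2 * tau.+1 + tau.+2.
Definition Kc := 1 + (maxdeg e * tau.+1).+1 * maxdeg e * iterK.
Definition Pmax := #|Apairs e| * tau.+1 ^ 2.

Lemma main_lemma fuel : forall u B c, Inv B -> Pmax < Phi B + fuel ->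
  exists B' c', improve nbrs lam tau fuel u (B, c) = Some (B', c') /\
    Inv B' /\ Phi B <= Phi B' /\ c' <= c + Kc * (Phi B' - Phi B).+1.
Proof.
elim: fuel => [|f IH] u B c HI Hf.
  by have := Phi_bound e t0 tau B; rewrite /Pmax in Hf; lia.
rewrite improveS /=.
have Hstep : forall p B1 c1, e u p.2 -> Inv B1 -> Phi B <= Phi B1 ->
    exists B2 c2, stepf nbrs lam tau f u (Some (B1, c1)) p = Some (B2, c2) /\
    Inv B2 /\ Phi B1 <= Phi B2 /\ c2 <= c1 + iterK + Kc * (Phi B2 - Phi B1).
  move=> [[[x a] d] v] B1 c1 /= Huv HI1 HP1; rewrite /stepf /=.
  have Hcnt := count_bound v u HI1.
  case: ifP => Hne.
    have [Heq Hnd] := addt_new Hne; rewrite Heq.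
    have HI2 := inv_upd esym HI1 Huv (firstge_grid lamrange a Huv) Hnd.
    have HP2 := Phi_strict (B := B1) Huv (firstge_grid lamrange a Huv) (lastle_grid lamrange d Huv) Hnd.
    set B2 := updB _ _ _ in HI2 HP2 *.
    set c1' := c1 + _ + _.
    have Hf2 : Pmax < Phi B2 + f by lia.
    have [B3 [c3 [Hr [HI3 [HP3 Hc3]]]]] := IH v B2 c1' HI2 Hf2.
    exists B3, c3; rewrite Hr; split=> //; split=> //; split; first by lia.
    have Hm : Kc * (Phi B3 - Phi B2).+1 <= Kc * (Phi B3 - Phi B1).
      by rewrite leq_mul2l; apply/orP; right; lia.
    rewrite /c1' /iterK in Hc3 *; move: Hc3 Hm Hcnt; set k := count _ _; set K1 := Kc * _; set K2 := Kc * _. clearbody B2 c1'. clearbody k K1 K2. lia.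
  exists B1, (c1 + 2 * tau.+1 + (count (fun t : trip V => t.1.1 == Some u) (B1 v)).+1).
  split=> //; split=> //; split=> //.
  rewrite subnn muln0 addn0 /iterK; move: Hcnt; set k := count _ _; clearbody k; lia.
have Hfold : forall l B1 c1, (forall p, p \in l -> e u p.2) -> Inv B1 -> Phi B <= Phi B1 ->
    exists B' c', foldl (stepf nbrs lam tau f u) (Some (B1, c1)) l = Some (B', c') /\
    Inv B' /\ Phi B1 <= Phi B' /\ c' <= c1 + size l * iterK + Kc * (Phi B' - Phi B1).
  elim=> [|p l IHl] B1 c1 Hl HI1 HP1.
    by exists B1, c1; rewrite /= subnn muln0 !addn0.
  have [B2 [c2 [Hs [HI2 [HP2 Hc2]]]]] := Hstep p B1 c1 (Hl p (mem_head _ _)) HI1 HP1.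
  have Hl' : forall q, q \in l -> e u q.2 by move=> q Hq; apply: Hl; rewrite in_cons Hq orbT.
  have [B' [c' [Hr [HI' [HP' Hc']]]]] := IHl B2 c2 Hl' HI2 (leq_trans HP1 HP2).
  exists B', c'.
  have -> : foldl (stepf nbrs lam tau f u) (Some (B1, c1)) (p :: l) =
     foldl (stepf nbrs lam tau f u) (Some (B2, c2)) l by rewrite -Hs.
  rewrite Hr; split=> //; split=> //; split; first by lia.
  rewrite (mulnB_split Kc HP2 HP') /= mulSn; move: Hc2 Hc'; set X := Kc * (Phi B' - Phi B2); set Y := Kc * (Phi B2 - Phi B1); set Z := size l * iterK; clearbody X Y Z; lia.
have Hl : forall p, p \in [seq (t, v) | t <- B u, v <- nbrs u] -> e u p.2.
  by move=> p /allpairsP[[t v] [_ Hv ->]] /=; rewrite -(mem_nbrs nbrsP).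
have [B' [c' [Hr [HI' [HP' Hc']]]]] := Hfold _ B c.+1 Hl HI (leqnn _).
exists B', c'; split=> //; split=> //; split=> //.
have Hsz : size [seq (t, v) | t <- B u, v <- nbrs u] <= (maxdeg e * tau.+1).+1 * maxdeg e.
  rewrite size_allpairs; apply: leq_mul; last exact: size_nbrs nbrsP u.
  apply: leq_trans (size_B nbrsP u HI) _.
  by rewrite ltnS leq_mul2r (size_nbrs nbrsP u) orbT.
have : size [seq (t, v) | t <- B u, v <- nbrs u] * iterK <= (maxdeg e * tau.+1).+1 * maxdeg e * iterK.
  by rewrite leq_mul2r Hsz orbT.
move: Hc'; rewrite (mulnS Kc); set X := Kc * (Phi B' - Phi B); set Z := size _ * iterK; rewrite /Kc; set W := _ * iterK; clearbody X Z W; lia.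
Qed.
End Main3.

Theorem theorem3 :
  exists C : nat,
  forall (V : finType) (e : rel V) (lam : V -> V -> seq nat)
         (nbrs : V -> seq V) (t0 tau : nat) (s : V),
    symmetric e -> irreflexive e ->
    (forall u v, lam u v = lam v u) ->
    (forall u v, e u v -> forall t, t \in lam u v -> t0 <= t < t0 + tau) ->
    (forall u, perm_eq (nbrs u) (enum [pred v | e u v])) ->
    exists (fuel : nat) (B : V -> seq (trip V)) (c : nat),
      improve nbrs lam tau fuel s (initB s, 0) = Some (B, c) /\
      c <= C * (nedges e).+1 * (maxdeg e).+1 ^ 2 * tau.+1 ^ 4.
Proof.
exists 10 => V e lam nbrs t0 tau s esym eirr lamsym lamrange nbrsP.
have HI : Inv e t0 tau (initB s).
  move=> v; rewrite /initB; case: (v == s) => //.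
  by split => // t; rewrite inE => /eqP -> /=.
have Hf : Pmax e tau < Phi e t0 tau (initB s) + (Pmax e tau).+1.
  move: (Pmax e tau) (Phi e t0 tau (initB s)) => x y; lia.
have [B' [c' [Hr [_ [_ Hc]]]]] := main_lemma esym lamrange nbrsP s 0 HI Hf.
exists (Pmax e tau).+1, B', c'; split => //.
have HPB := Phi_bound e t0 tau B'.
have H1 : Kc e tau * (Phi e t0 tau B' - Phi e t0 tau (initB s)).+1 <= Kc e tau * (Pmax e tau).+1.
  rewrite leq_mul2l; apply/orP; right; rewrite ltnS; exact: leq_trans (leq_subr _ _) HPB.
have H2 : Kc e tau <= 5 * (maxdeg e).+1 ^ 2 * tau.+1 ^ 2.
  rewrite /Kc /iterK; move: (maxdeg e) => D; nia.
have H3 : (Pmax e tau).+1 <= 2 * (nedges e).+1 * tau.+1 ^ 2.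
  rewrite /Pmax; have := Apairs_bound eirr; move: #|Apairs e| (nedges e) => A m HA.
  have : A * tau.+1 ^ 2 <= 2 * m * tau.+1 ^ 2 by rewrite leq_mul2r HA orbT.
  nia.
have H4 := leq_mul H2 H3.
move: Hc H1 H4; move: (Kc e tau * _) (Kc e tau * _) => X Y.
move: (Kc e tau) (Pmax e tau).+1 (maxdeg e) (nedges e) => K P D M.
nia.
Qed.
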